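(* There exist absolute constants $c>0$ and $k_0$ such that for all integers $k\ge k_0$, all $\varepsilon\in(0,1)$ and all $\delta\in(0,1/4)$, the $(\varepsilon,\delta)$-sample complexity of estimating the Shannon entropy $H(\vec p)=\sum_{i=1}^k p_i\log\frac1{p_i}$ over $\Delta_k$ satisfies \[ C_H(\varepsilon,\delta)\ge c\,\log\frac1\delta\cdot\frac{\log^2 k}{\varepsilon^2}. \]
   Context: $\Delta_k$ is the set of probability distributions $\vec p=(p_1,\dots,p_k)$ on $[k]=\{1,\dots,k\}$; $\log$ is the natural logarithm. An estimator is any map $\hat f:[k]^*\to\mathbb{R}$ from finite sequences over $[k]$. For a property $f:\Delta_k\to\mathbb{R}$, the $(\varepsilon,\delta)$-sample complexity is \[ C_f(\varepsilon,\delta):=\min_{\hat f}\min\{n:\ \Pr_{X^n\sim\vec p}(|\hat f(X^n)-f(\vec p)|>\varepsilon)\le\delta\ \ \forall\vec p\in\Delta_k\}, \] where $X^n$ denotes $n$ i.i.d. samples from $\vec p$. *)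

(* Defs.v *)
From Stdlib Require Import Reals List.
Import ListNotations.
Open Scope R_scope.

(* The alphabet [k] is represented by {0,...,k-1}. *)

Definition sum_range (k : nat) (f : nat -> R) : R :=
  fold_right Rplus 0 (map f (seq 0 k)).

(* p : nat -> R is a probability distribution on [k] (values outside [k] are irrelevant). *)
Definition is_dist (k : nat) (p : nat -> R) : Prop :=
  (forall i, (i < k)%nat -> 0 <= p i) /\ sum_range k p = 1.

Definition entropy (k : nat) (p : nat -> R) : R :=
  sum_range k (fun i => if Rlt_dec 0 (p i) then p i * ln (/ p i) else 0).

Fixpoint all_seqs (k n : nat) : list (list nat) :=
  match n with
  | O => [ [] ]
  | S m => flat_map (fun s => map (fun i => i :: s) (seq 0 k)) (all_seqs k m)
  end.

Definition seq_prob (p : nat -> R) (s : list nat) : R :=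
  fold_right (fun i acc => p i * acc) 1 s.

Definition estimator := list nat -> R.

Definition err_prob (k n : nat) (fh : estimator) (target : R) (p : nat -> R) (eps : R) : R :=
  fold_right Rplus 0
    (map (fun s => if Rlt_dec eps (Rabs (fh s - target)) then seq_prob p s else 0)
         (all_seqs k n)).

Definition achieves (k : nat) (f : (nat -> R) -> R) (fh : estimator) (n : nat) (eps delta : R) : Prop :=
  forall p, is_dist k p -> err_prob k n fh (f p) p eps <= delta.

(* C_f(eps,delta) >= b  (with C_f = +infinity if no (fh,n) works):
   every estimator/sample-size pair that achieves (eps,delta) has n >= b. *)
Definition sample_complexity_ge (k : nat) (f : (nat -> R) -> R) (eps delta b : R) : Prop :=
  forall (fh : estimator) (n : nat), achieves k f fh n eps delta -> b <= INR n.

(* Main.v *)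
Require Import Defs.
From Stdlib Require Import Reals Lra Lia List.
Import ListNotations.
Open Scope R_scope.

Definition sumL {T} (f : T -> R) (l : list T) : R := fold_right Rplus 0 (map f l).

Lemma sumL_cons {T} (f:T->R) x l : sumL f (x::l) = f x + sumL f l.
Proof. reflexivity. Qed.
Lemma sumL_nil {T} (f:T->R) : sumL f [] = 0.
Proof. reflexivity. Qed.

Lemma sumL_app {T} (f:T->R) l1 l2 : sumL f (l1 ++ l2) = sumL f l1 + sumL f l2.
Proof.
  induction l1 as [|x l1 IH]; [rewrite sumL_nil; simpl; ring|].
  cbn [app]. rewrite !sumL_cons, IH; ring.
Qed.

Lemma sumL_plus {T} (f g:T->R) l : sumL (fun x => f x + g x) l = sumL f l + sumL g l.
Proof.
  induction l as [|x l IH]; [rewrite !sumL_nil; ring|].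
  rewrite !sumL_cons, IH; ring.
Qed.

Lemma sumL_scal {T} (f:T->R) c l : sumL (fun x => c * f x) l = c * sumL f l.
Proof.
  induction l as [|x l IH]; [rewrite !sumL_nil; ring|].
  rewrite !sumL_cons, IH; ring.
Qed.

Lemma sumL_ext {T} (f g:T->R) l : (forall x, f x = g x) -> sumL f l = sumL g l.
Proof.
  intros H; induction l as [|x l IH]; [reflexivity|].
  rewrite !sumL_cons, IH, H; ring.
Qed.

Lemma sumL_le {T} (f g:T->R) l : (forall x, f x <= g x) -> sumL f l <= sumL g l.
Proof.
  intros H; induction l as [|x l IH]; [rewrite !sumL_nil; lra|].
  rewrite !sumL_cons. specialize (H x). lra.
Qed.

Lemma sumL_nonneg {T} (f:T->R) l : (forall x, 0 <= f x) -> 0 <= sumL f l.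
Proof.
  intros H; induction l as [|x l IH]; [rewrite !sumL_nil; lra|].
  rewrite !sumL_cons. specialize (H x). lra.
Qed.

Lemma sumL_flat_map {T U} (f:U->R) (g : T -> list U) l :
  sumL f (flat_map g l) = sumL (fun x => sumL f (g x)) l.
Proof.
  induction l as [|x l IH]; [reflexivity|].
  cbn [flat_map]. rewrite sumL_app, sumL_cons, IH; ring.
Qed.

Lemma sumL_map {T U} (f:U->R) (h : T -> U) l :
  sumL f (map h l) = sumL (fun x => f (h x)) l.
Proof. unfold sumL; rewrite map_map; reflexivity. Qed.

Lemma CS {T} (a b : T -> R) l :
  (sumL (fun x => a x * b x) l)^2 <= sumL (fun x => a x ^ 2) l * sumL (fun x => b x ^2) l.
Proof.
  induction l as [|x l IH]; [rewrite !sumL_nil; simpl; lra|].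
  rewrite !sumL_cons.
  set (S := sumL (fun x => a x * b x) l) in *.
  set (A := sumL (fun x => a x ^ 2) l) in *.
  set (B := sumL (fun x => b x ^ 2) l) in *.
  assert (HA : 0 <= A) by (apply sumL_nonneg; intros; apply pow2_ge_0).
  assert (HB : 0 <= B) by (apply sumL_nonneg; intros; apply pow2_ge_0).
  set (p := a x) in *. set (q := b x) in *.
  set (X := p^2*B + q^2*A).
  assert (HX : 0 <= X).
  { unfold X. assert (0 <= p^2*B) by (apply Rmult_le_pos; [apply pow2_ge_0|lra]).
    assert (0 <= q^2*A) by (apply Rmult_le_pos; [apply pow2_ge_0|lra]). lra. }
  assert (Hid : X^2 - (2*p*q*S)^2 = (p^2*B - q^2*A)^2 + 4*(p*q)^2*(A*B - S^2))
    by (unfold X; ring).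
  assert (H2 : (2*p*q*S)^2 <= X^2).
  { assert (0 <= (p^2*B - q^2*A)^2) by apply pow2_ge_0.
    assert (0 <= 4*(p*q)^2*(A*B - S^2)).
    { apply Rmult_le_pos; [|lra]. assert (0 <= (p*q)^2) by apply pow2_ge_0. lra. }
    lra. }
  assert (H3 : 2*p*q*S <= X).
  { destruct (Rle_dec (2*p*q*S) X) as [h|h]; [exact h|]. exfalso.
    apply Rnot_le_lt in h. nra. }
  unfold X in H3. nra.
Qed.

Lemma sp_cons f i s : seq_prob f (i::s) = f i * seq_prob f s.
Proof. reflexivity. Qed.

Lemma sp_nonneg f s : (forall i, 0 <= f i) -> 0 <= seq_prob f s.
Proof.
  intros H; induction s as [|i s IH]; [simpl; lra|].
  rewrite sp_cons; apply Rmult_le_pos; auto.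
Qed.

Lemma sp_sqrt p q s : (forall i, 0 <= p i) -> (forall i, 0 <= q i) ->
  sqrt (seq_prob p s * seq_prob q s) = seq_prob (fun i => sqrt (p i * q i)) s.
Proof.
  intros Hp Hq; induction s as [|i s IH]; [simpl; rewrite Rmult_1_r; apply sqrt_1|].
  rewrite !sp_cons, <- IH.
  replace (p i * seq_prob p s * (q i * seq_prob q s))
    with ((p i * q i) * (seq_prob p s * seq_prob q s)) by ring.
  apply sqrt_mult; apply Rmult_le_pos; auto; apply sp_nonneg; auto.
Qed.

Lemma sum_all_seqs f k n : sumL (seq_prob f) (all_seqs k n) = (sum_range k f)^n.
Proof.
  induction n as [|n IH].
  - simpl. unfold sumL, seq_prob. simpl. ring.
  - cbn [all_seqs]. rewrite sumL_flat_map.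
    rewrite (sumL_ext _ (fun s => sum_range k f * seq_prob f s)).
    + rewrite sumL_scal, IH. simpl. ring.
    + intros s. rewrite sumL_map.
      rewrite (sumL_ext _ (fun i => seq_prob f s * f i)).
      * rewrite sumL_scal. unfold sum_range. fold (sumL f (seq 0 k)). ring.
      * intros i. rewrite sp_cons. ring.
Qed.

Lemma sum_const_tail (f : nat -> R) c m n : (forall i, (m <= i)%nat -> f i = c) ->
  sumL f (seq m n) = INR n * c.
Proof.
  revert m; induction n as [|n IH]; intros m Hf; [cbn [seq]; rewrite sumL_nil; simpl; ring|].
  cbn [seq]. rewrite sumL_cons, (IH (S m)) by (intros; apply Hf; lia).
  rewrite Hf by lia. rewrite S_INR; ring.
Qed.

Lemma sum_range_tail (g : nat -> R) k' c : (forall i, (1 <= i)%nat -> g i = c) ->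
  sum_range (S k') g = g 0%nat + INR k' * c.
Proof.
  intros H. change (sum_range (S k') g) with (sumL g (0%nat :: seq 1 k')).
  rewrite sumL_cons, (sum_const_tail _ c); auto.
Qed.

Definition pd (K a : R) (i : nat) : R := if Nat.eqb i 0 then a else (1 - a) / K.

Lemma pd_nonneg K a i : 0 < K -> 0 <= a <= 1 -> 0 <= pd K a i.
Proof.
  intros HK Ha; unfold pd; destruct (Nat.eqb i 0); [lra|].
  unfold Rdiv; apply Rmult_le_pos; [lra| left; apply Rinv_0_lt_compat; lra].
Qed.

Lemma pd_dist k' a : 0 < INR k' -> 0 <= a <= 1 -> is_dist (S k') (pd (INR k') a).
Proof.
  intros HK Ha; split.
  - intros; apply pd_nonneg; auto.
  - rewrite (sum_range_tail _ k' ((1-a)/INR k')).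
    + unfold pd; simpl. field. lra.
    + intros [|i] Hi; [lia|reflexivity].
Qed.

Lemma pd_entropy k' a : 0 < INR k' -> 0 < a < 1 ->
  entropy (S k') (pd (INR k') a) = - a * ln a - (1-a) * ln (1-a) + (1-a) * ln (INR k').
Proof.
  intros HK Ha. unfold entropy.
  rewrite (sum_range_tail _ k' ((1-a)/INR k' * ln (/((1-a)/INR k')))).
  - unfold pd; cbn [Nat.eqb]. destruct (Rlt_dec 0 a) as [_|h]; [|lra].
    rewrite ln_Rinv by lra.
    replace (/((1-a)/INR k')) with (INR k' * /(1-a)) by (field; lra).
    rewrite ln_mult, ln_Rinv; try lra.
    + field. lra.
    + apply Rinv_0_lt_compat; lra.
  - intros [|i] Hi; [lia|]. unfold pd; cbn [Nat.eqb].
    destruct (Rlt_dec 0 ((1-a)/INR k')) as [_|h]; [reflexivity|].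
    exfalso; apply h; apply Rdiv_lt_0_compat; lra.
Qed.

Lemma ln_le' x y : 0 < x -> x <= y -> ln x <= ln y.
Proof.
  intros Hx [H|H]; [left; apply ln_increasing; auto| subst; lra].
Qed.

Lemma ln_le_m1 y : 0 < y -> ln y <= y - 1.
Proof.
  intros Hy. pose proof (exp_ineq1_le (ln y)). rewrite exp_ln in H; lra.
Qed.

Lemma min_max_mul a b : Rmin a b * Rmax a b = a * b.
Proof. unfold Rmin, Rmax; destruct (Rle_dec a b); ring. Qed.
Lemma min_max_add a b : Rmax a b + Rmin a b = a + b.
Proof. unfold Rmin, Rmax; destruct (Rle_dec a b); ring. Qed.

Lemma fdelta d : 0 < d < 1/4 -> ln (/ d) / 10 <= - ln (4 * d * (1 - d)).
Proof.
  intros Hd.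
  assert (Hpos : 0 < 4*d*(1-d)) by nra.
  destruct (Rle_dec d (1/16)) as [h|h].
  - rewrite ln_Rinv by lra.
    replace (4*d*(1-d)) with (d * (4*(1-d))) by ring.
    rewrite ln_mult by lra.
    assert (ln (4*(1-d)) <= ln 4) by (apply ln_le'; lra).
    assert (ln 16 <= ln (/d)) by (apply ln_le'; [lra|]; apply (Rmult_le_reg_l d); [lra|];
      rewrite Rinv_r by lra; lra).
    rewrite ln_Rinv in H0 by lra.
    replace 16 with (4*4) in H0 by ring. rewrite ln_mult in H0 by lra.
    assert (0 < ln 4) by (rewrite <- ln_1; apply ln_increasing; lra).
    lra.
  - assert (ln (4*d*(1-d)) <= ln (3/4)) by (apply ln_le'; [lra| nra]).
    assert (ln (/d) <= ln 16) by (apply ln_le'; [apply Rinv_0_lt_compat; lra|];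
      apply (Rmult_le_reg_l d); [lra|]; rewrite Rinv_r by lra; lra).
    assert (ln 16 <= 10 * ln (4/3)).
    { replace (10 * ln (4/3)) with (INR 10 * ln (4/3)) by (simpl; ring).
      rewrite <- ln_pow by lra. apply ln_le'; [lra|]. simpl; lra. }
    assert (ln (3/4) = - ln (4/3)) by (rewrite <- ln_Rinv by lra; f_equal; field).
    lra.
Qed.

Theorem theorem2 :
  exists (c : R) (k0 : nat), 0 < c /\
    forall (k : nat) (eps delta : R),
      (k0 <= k)%nat -> 0 < eps < 1 -> 0 < delta < 1/4 ->
      sample_complexity_ge k (entropy k) eps delta
        (c * ln (/ delta) * ((ln (INR k)) ^ 2 / eps ^ 2)).
Proof.
  exists (/1280), 4098%nat. split; [lra|].
  intros k eps delta Hk Heps Hdel fh n Hach.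
  destruct k as [|k']; [lia|].
  set (K := INR k').
  assert (HK : 4097 <= K).
  { unfold K. replace 4097 with (INR 4097) by (rewrite INR_IZR_INZ; reflexivity).
    apply le_INR; lia. }
  set (L := ln K).
  assert (HL : 6 <= L).
  { unfold L. pose proof ln_lt_2.
    assert (ln (2^12) <= ln K) by (apply ln_le'; [lra|simpl; lra]).
    rewrite ln_pow in H0 by lra. simpl INR in H0. lra. }
  set (s := 2*eps/L).
  assert (Hs : 0 < s < 1/3).
  { unfold s. split; [apply Rdiv_lt_0_compat; lra|].
    apply (Rmult_lt_reg_r L); [lra|]. unfold Rdiv; rewrite Rmult_assoc, Rinv_l by lra. lra. }
  set (u := /2 - s). set (v := /2 + s).
  set (p := pd K u). set (q := pd K v).
  assert (HK0 : 0 < K) by lra.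
  assert (Hp : is_dist (S k') p) by (apply pd_dist; [exact HK0| unfold u; lra]).
  assert (Hq : is_dist (S k') q) by (apply pd_dist; [exact HK0| unfold v; lra]).
  assert (Hent : entropy (S k') p - entropy (S k') q = 4 * eps).
  { unfold p, q. rewrite !pd_entropy by (exact HK0 || (unfold u, v; lra)).
    replace (1 - u) with v by (unfold u, v; lra).
    replace (1 - v) with u by (unfold u, v; lra).
    unfold u, v, s, L, K. field. fold K. fold L. lra. }
  assert (Hpn : forall i, 0 <= p i) by (intros; apply pd_nonneg; [exact HK0| unfold u; lra]).
  assert (Hqn : forall i, 0 <= q i) by (intros; apply pd_nonneg; [exact HK0| unfold v; lra]).
  set (l := all_seqs (S k') n).
  set (P := seq_prob p). set (Q := seq_prob q).
  set (Hpe := entropy (S k') p). set (Hqe := entropy (S k') q). fold Hpe Hqe in Hent.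
  set (m := sumL (fun x => Rmin (P x) (Q x)) l).
  assert (HPn : forall x, 0 <= P x) by (intros; apply sp_nonneg; auto).
  assert (HQn : forall x, 0 <= Q x) by (intros; apply sp_nonneg; auto).
  assert (Hm : m <= 2 * delta).
  { pose proof (Hach p Hp) as E1. pose proof (Hach q Hq) as E2.
    change (sumL (fun x => if Rlt_dec eps (Rabs (fh x - Hpe)) then P x else 0) l <= delta) in E1.
    change (sumL (fun x => if Rlt_dec eps (Rabs (fh x - Hqe)) then Q x else 0) l <= delta) in E2.
    enough (m <= sumL (fun x => if Rlt_dec eps (Rabs (fh x - Hpe)) then P x else 0) l +
                 sumL (fun x => if Rlt_dec eps (Rabs (fh x - Hqe)) then Q x else 0) l) by lra.
    rewrite <- sumL_plus. apply sumL_le. intros x.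
    pose proof (Rmin_l (P x) (Q x)). pose proof (Rmin_r (P x) (Q x)).
    pose proof (HPn x). pose proof (HQn x).
    destruct (Rlt_dec eps (Rabs (fh x - Hpe))) as [h1|h1];
    destruct (Rlt_dec eps (Rabs (fh x - Hqe))) as [h2|h2]; try lra.
    exfalso. apply Rnot_lt_le in h1. apply Rnot_lt_le in h2.
    pose proof (Rabs_triang (Hpe - fh x) (fh x - Hqe)) as T.
    assert (E : Hpe - fh x + (fh x - Hqe) = 4 * eps) by lra.
    rewrite E, Rabs_minus_sym in T.
    rewrite (Rabs_right (4*eps)) in T by lra. lra. }
  assert (Hm0 : 0 <= m).
  { apply sumL_nonneg. intros x. unfold Rmin. destruct Rle_dec; auto. }
  assert (HsP : sumL P l = 1).
  { unfold P, l. rewrite sum_all_seqs. destruct Hp as [_ ->]. apply pow1. }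
  assert (HsQ : sumL Q l = 1).
  { unfold Q, l. rewrite sum_all_seqs. destruct Hq as [_ ->]. apply pow1. }
  set (B := sumL (fun x => sqrt (P x * Q x)) l).
  assert (HCS : B ^ 2 <= m * (2 - m)).
  { assert (B = sumL (fun x => sqrt (Rmin (P x) (Q x)) * sqrt (Rmax (P x) (Q x))) l).
    { apply sumL_ext. intros x. rewrite <- sqrt_mult.
      - rewrite min_max_mul; reflexivity.
      - unfold Rmin; destruct Rle_dec; auto.
      - unfold Rmax; destruct Rle_dec; auto. }
    rewrite H. eapply Rle_trans; [apply CS|].
    rewrite (sumL_ext _ (fun x => Rmin (P x) (Q x))).
    2:{ intros x; apply pow2_sqrt. unfold Rmin; destruct Rle_dec; auto. }
    rewrite (sumL_ext (fun x => sqrt (Rmax (P x) (Q x)) ^ 2) (fun x => Rmax (P x) (Q x))).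
    2:{ intros x; apply pow2_sqrt. unfold Rmax; destruct Rle_dec; auto. }
    fold m. apply Rmult_le_compat_l; [exact Hm0|].
    assert (sumL (fun x => Rmax (P x) (Q x)) l + m = 2).
    { unfold m. rewrite <- sumL_plus.
      rewrite (sumL_ext _ (fun x => P x + Q x)) by (intros; apply min_max_add).
      rewrite sumL_plus. fold (sumL P l). rewrite HsP, HsQ. ring. }
    lra. }
  assert (Hx : 0 < 4 * s^2 <= 1/2) by nra.
  set (x := 4 * s^2) in *.
  assert (HBn : B ^ 2 = (1 - x) ^ n).
  { assert (B = sumL (seq_prob (fun i => sqrt (p i * q i))) l).
    { apply sumL_ext. intros y. unfold P, Q. apply sp_sqrt; auto. }
    rewrite H. unfold l. rewrite sum_all_seqs.
    rewrite (sum_range_tail _ k' (sqrt ((1-u)/K * ((1-v)/K)))).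
    2:{ intros [|i] Hi; [lia|reflexivity]. }
    unfold p, q, pd; cbn [Nat.eqb].
    assert (Huv : 0 <= u * v) by (unfold u, v; nra).
    replace ((1-u)/K * ((1-v)/K)) with ((u*v) * (/K)^2) by (unfold u, v; field; lra).
    rewrite (sqrt_mult (u*v) ((/K)^2)) by (try lra; apply pow2_ge_0).
    rewrite sqrt_pow2 by (left; apply Rinv_0_lt_compat; lra).
    fold K. replace (sqrt (u * v) + K * (sqrt (u * v) * / K)) with (sqrt (2^2) * sqrt (u*v))
      by (rewrite sqrt_pow2 by lra; field; lra).
    rewrite <- (sqrt_mult (2^2) (u*v)) by (try lra; apply pow2_ge_0).
    replace (2^2 * (u*v)) with (1 - x) by (unfold x, u, v; field).
    rewrite <- pow_mult, Nat.mul_comm, pow_mult, pow2_sqrt by lra. reflexivity. }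
  assert (Hpow : (1 - x) ^ n <= 4 * delta * (1 - delta)) by nra.
  assert (Hln : INR n * ln (1 - x) <= ln (4 * delta * (1 - delta))).
  { rewrite <- ln_pow by lra. apply ln_le'; [apply pow_lt; lra| exact Hpow]. }
  assert (Hlnx : - ln (1 - x) <= 2 * x).
  { rewrite <- ln_Rinv by lra. eapply Rle_trans; [apply ln_le_m1; apply Rinv_0_lt_compat; lra|].
    apply (Rmult_le_reg_r (1 - x)); [lra|].
    replace ((/ (1 - x) - 1) * (1 - x)) with x by (field; lra). nra. }
  pose proof (fdelta delta Hdel) as Hf.
  assert (HN : 0 <= INR n) by apply pos_INR.
  set (N := INR n) in *. set (D := ln (/ delta)) in *.
  assert (HD : 0 < D).
  { unfold D. rewrite <- ln_1. apply ln_increasing; [lra|].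
    apply (Rmult_lt_reg_l delta); [lra|]. rewrite Rinv_r by lra. lra. }
  assert (H1 : D / 10 <= N * (2 * x)).
  { assert (N * (- ln (1-x)) <= N * (2*x)) by (apply Rmult_le_compat_l; lra). lra. }
  assert (H2 : N * (2 * x) = 32 * N * eps^2 / L^2) by (unfold x, s; field; lra).
  assert (H3 : D * L^2 <= 320 * eps^2 * N).
  { rewrite H2 in H1.
    apply (Rmult_le_compat_r (10 * L^2)) in H1; [|nra].
    replace (D / 10 * (10 * L ^ 2)) with (D * L^2) in H1 by field.
    replace (32 * N * eps ^ 2 / L ^ 2 * (10 * L ^ 2)) with (320 * eps^2 * N) in H1
      by (field; lra). exact H1. }
  rewrite S_INR. fold K.
  assert (HM0 : 0 <= ln (K + 1)) by (rewrite <- ln_1; apply ln_le'; lra).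
  assert (HM : ln (K + 1) <= 2 * L).
  { unfold L. replace (2 * ln K) with (ln (K * K)) by (rewrite ln_mult by lra; ring).
    apply ln_le'; nra. }
  assert (HM2 : ln (K + 1) ^ 2 <= 4 * L^2) by nra.
  apply Rle_trans with (/1280 * D * (4 * L^2 / eps^2)).
  - apply Rmult_le_compat_l; [lra|].
    unfold Rdiv. apply Rmult_le_compat_r; [|lra].
    left; apply Rinv_0_lt_compat; nra.
  - apply (Rmult_le_reg_r (eps^2)); [nra|].
    replace (/ 1280 * D * (4 * L ^ 2 / eps ^ 2) * eps ^ 2) with (D * L^2 / 320) by (field; lra).
    nra.
Qed.
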